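(* Let $N=\{1,\dots,n\}$ and let $\Psi_{TU}$ be the StatisticalSolution problem with instance space $\mathcal X=2^N$ (coalitions), game class $\mathbb G=\{v:2^N\to\mathbb R_{+}\}$ (all TU cooperative games on $N$), solution space $\mathbb S=\mathbb R^n$ (payoff vectors), and local loss $\lambda(S,v,\vec x)=1$ if $v(S)>\sum_{i\in S}x_i$ (i.e. $S$ blocks $\vec x$) and $\lambda(S,v,\vec x)=0$ otherwise. Then $\mathit{Sd}(\Psi_{TU})\le n$; in particular the solution dimension of TU cooperative games is $O(n)$.
   Context: A StatisticalSolution problem is a tuple $\Psi=(\mathcal X,\mathcal Y,\mathbb G,\mathbb S,\lambda)$ with $\mathbb G\subseteq\mathcal Y^{\mathcal X}$ a class of games, $\mathbb S$ a solution space and $\lambda:\mathcal X\times\mathbb G\times\mathbb S\to\{0,1\}$ a local loss. A set $C\subseteq\mathcal X$ is S-shattered in $\Psi$ if there exists a game $g\in\mathbb G$ such that for every $b:C\to\{0,1\}$ there is $s\in\mathbb S$ (depending on $b$) with $\lambda(x,g,s)=b(x)$ for all $x\in C$. The solution dimension $\mathit{Sd}(\Psi)$ is the largest size of an S-shattered set. *)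

(* Defs.v *)
From HB Require Import structures.
From mathcomp Require Import all_boot all_order all_algebra.
Set Implicit Arguments. Unset Strict Implicit. Unset Printing Implicit Defensive.
Import Order.TTheory GRing.Theory Num.Theory.
Local Open Scope ring_scope.

(* The game class GG is a subset of the type G (given by the
   predicate inG), SS is the type of solutions, lambda : X -> G -> SS -> bool
   is the local loss ({0,1} encoded as bool). *)
Definition S_shattered (X : finType) (G SS : Type) (inG : G -> Prop)
    (lam : X -> G -> SS -> bool) (C : {set X}) : Prop :=
  exists g : G, inG g /\
    forall b : X -> bool, exists s : SS, forall x, x \in C -> lam x g s = b x.

Definition solution_dim_le (X : finType) (G SS : Type) (inG : G -> Prop)
    (lam : X -> G -> SS -> bool) (k : nat) : Prop :=
  forall C : {set X}, S_shattered inG lam C -> (#|C| <= k)%N.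

Definition TU_game (R : realFieldType) (n : nat) := {set 'I_n} -> R.
Definition TU_class (R : realFieldType) (n : nat) (v : TU_game R n) : Prop :=
  forall S, 0 <= v S.
Definition TU_loss (R : realFieldType) (n : nat)
    (S : {set 'I_n}) (v : TU_game R n) (x : 'I_n -> R) : bool :=
  \sum_(i in S) x i < v S.

(* Main.v *)
Require Import Defs.
From HB Require Import structures.
From mathcomp Require Import all_boot all_order all_algebra.
Set Implicit Arguments. Unset Strict Implicit. Unset Printing Implicit Defensive.
Import Order.TTheory GRing.Theory Num.Theory.
Local Open Scope ring_scope.

Lemma key (R : realFieldType) (n m : nat) (S : 'I_m -> {set 'I_n})
  (w : 'I_m -> R) (mu : 'I_m -> R) (x : 'I_n -> R) :
  (forall i : 'I_n, \sum_k mu k * (i \in S k)%:R = 0) ->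
  (forall k, (\sum_(i in S k) x i < w k) = (0 < mu k)) ->
  0 <= \sum_k mu k * w k /\ ((exists k, 0 < mu k) -> 0 < \sum_k mu k * w k).
Proof.
move=> Hker Hlab.
have E : \sum_k mu k * w k = \sum_k mu k * (w k - \sum_(i in S k) x i).
  have Z : \sum_k mu k * (\sum_(i in S k) x i) = 0.
    transitivity (\sum_k \sum_i mu k * (i \in S k)%:R * x i).
      apply: eq_bigr => k _; rewrite big_mkcond mulr_sumr /=.
      apply: eq_bigr => i _; case: (i \in S k); by rewrite ?mulr1 ?mulr0 ?mul0r.
    rewrite exchange_big /= big1 // => i _.
    by rewrite -mulr_suml Hker mul0r.
  under [RHS]eq_bigr do rewrite mulrBr.
  by rewrite sumrB Z subr0.
have T : forall k, 0 <= mu k * (w k - \sum_(i in S k) x i).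
  move=> k; have := Hlab k; case: ltrP => [H1 H2|H1 H2].
    by rewrite mulr_ge0 // ?subr_ge0 ?ltW // -H2.
  by rewrite mulr_le0 // ?subr_le0 // leNgt -H2.
rewrite E; split; first by apply: sumr_ge0 => k _; exact: T.
case=> k0 Hk0; rewrite (bigD1 k0) //=.
apply: ltr_wpDr; first by apply: sumr_ge0 => k _; exact: T.
apply: mulr_gt0 => //; rewrite subr_gt0 Hlab //.
Qed.

Theorem mainTheorem3 (R : realFieldType) (n : nat) :
  solution_dim_le (@TU_class R n) (@TU_loss R n) n.
Proof.
move=> C [v [_ Hsh]].
rewrite leqNgt; apply/negP => HC.
set m := #|C| in HC.
pose S : 'I_m -> {set 'I_n} := fun k => enum_val k.
pose A : 'M[R]_(m, n) := \matrix_(k, i) (i \in S k)%:R.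
have Hnf : ~~ row_free A by rewrite -row_leq_rank -ltnNge (leq_ltn_trans (rank_leq_col A)).
have Hnz : kermx A != 0 by rewrite kermx_eq0.
have : [exists k, [exists j, kermx A k j != 0]].
  apply: contraNT Hnz => /existsPn H; apply/eqP/matrixP => k j.
  by move/existsPn: (H k) => /(_ j)/negPn/eqP ->; rewrite mxE.
case/existsP => k0 /existsP [j0 Hj0].
pose lam : 'I_m -> R := fun k => kermx A k0 k.
have Hker : forall i, \sum_k lam k * (i \in S k)%:R = 0.
  move=> i; have := mulmx_ker A; move/matrixP/(_ k0 i).
  move=> E; rewrite mxE in E.
  transitivity (\sum_j kermx A k0 j * A j i); last by rewrite E mxE.
  by apply: eq_bigr => k _; rewrite /lam; congr (_ * _); rewrite /A mxE.
have HkerN : forall i, \sum_k (- lam k) * (i \in S k)%:R = 0.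
  by move=> i; under eq_bigr do rewrite mulNr; rewrite sumrN Hker oppr0.
have SC : forall k, S k \in C by move=> k; exact: enum_valP.
pose b1 : {set 'I_n} -> bool := fun T => [exists k, (S k == T) && (0 < lam k)].
pose b2 : {set 'I_n} -> bool := fun T => [exists k, (S k == T) && (0 < - lam k)].
have Hb : forall (mu : 'I_m -> R) k,
    [exists k', (S k' == S k) && (0 < mu k')] = (0 < mu k).
  move=> mu k; apply/existsP/idP => [[k' /andP [/eqP E H]]|H].
    by move/enum_val_inj: E => <-.
  by exists k; rewrite eqxx.
have [x1 Hx1] := Hsh b1.
have [x2 Hx2] := Hsh b2.
have [G1 P1] := key (w := fun k => v (S k)) (x := x1) Hker
  (fun k => etrans (Hx1 _ (SC k)) (Hb lam k)).
have [G2 P2] := key (w := fun k => v (S k)) (x := x2) HkerN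
  (fun k => etrans (Hx2 _ (SC k)) (Hb (fun k => - lam k) k)).
move: G2 P2; under eq_bigr do rewrite mulNr; rewrite sumrN oppr_ge0 => G2 P2.
have E0 : \sum_k lam k * v (S k) = 0 by apply/eqP; rewrite eq_le G2 G1.
case: (ltrgtP 0 (lam j0)) => H.
- by move: (P1 (ex_intro _ j0 H)); rewrite E0 ltxx.
- have H' : 0 < - lam j0 by rewrite oppr_gt0.
  by move: (P2 (ex_intro _ j0 H')); rewrite E0 oppr0 ltxx.
- by move: Hj0; rewrite (_ : kermx A k0 j0 = 0) ?eqxx // [RHS]H.
Qed.
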